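(* Let $\mathcal H$ be a hypergraph and $\mathcal A$ a sub-hypergraph of $\mathcal H$. Suppose that for any $\sigma,\sigma'\in\mathcal H$, either $\sigma\cap\sigma'=\emptyset$ or $\sigma\cap\sigma'\in\mathcal H$; and that for any $\tau\in\mathcal A$ and $\tau'\in\mathcal H\setminus\mathcal A$, $\tau\cap\tau'=\emptyset$. Then for each $n\ge0$, $$H_n(\mathcal H,\mathcal A)\oplus H_n(\mathcal H,\mathcal H\setminus\mathcal A)\cong H_n(\mathcal H).$$
   Context: A hypergraph is a finite set of nonempty finite subsets of a vertex set (hyperedges); an $n$-hyperedge has $n+1$ vertices. $\mathcal H\setminus\mathcal A=\{\sigma\in\mathcal H:\sigma\notin\mathcal A\}$. The associated simplicial complex is $\Delta\mathcal H=\{\sigma\ne\emptyset:\sigma\subseteq\tau\text{ for some }\tau\in\mathcal H\}$. Fix an abelian coefficient group $G$; chains are simplicial chains of $\Delta\mathcal H$ with coefficients in $G$ and boundary $\partial$; $G(\mathcal X)_n$ is the group of $G$-linear combinations of $n$-hyperedges of $\mathcal X$; $\mathrm{Inf}_n(\mathcal X)=G(\mathcal X)_n\cap\partial_n^{-1}(G(\mathcal X)_{n-1})$. Embedded homology $H_n(\mathcal H)=H_n(\mathrm{Inf}_*(\mathcal H))$; relative embedded homology $H_n(\mathcal H,\mathcal A)=H_n(\mathrm{Inf}_*(\mathcal H)/\mathrm{Inf}_*(\mathcal A))$. *)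

(* Defs.v *)
From HB Require Import structures.
From mathcomp Require Import all_boot all_order all_algebra.
Set Implicit Arguments. Unset Strict Implicit. Unset Printing Implicit Defensive.
Import GRing.Theory.
Local Open Scope ring_scope.

Section Hyper.
Variables (V : finType) (G : zmodType).

Definition hypergraph (H : {set {set V}}) : Prop := set0 \notin H.

(* Simplicial chains (all degrees at once): a G-valued function on simplices
   (finite nonempty subsets of V).  A chain of degree n is one supported on
   sets of cardinality n+1.  Orientation: vertices of a simplex are ordered
   by the fixed total order enum_rank of V. *)
Definition chain := {ffun {set V} -> G}.

(* sign (-1)^{position of v in t ∪ {v}} applied to x *)
Definition signed (v : V) (t : {set V}) (x : G) : G :=
  if odd #|[set w in t | (enum_rank w < enum_rank v)%N]| then - x else x.

(* Simplicial boundary:  ∂[v_0..v_n] = Σ_i (-1)^i [v_0..^v_i..v_n],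
   written dually: (∂c)(t) = Σ_{v∉t} (-1)^{pos(v)} c(t ∪ {v}) for t ≠ ∅
   (so that ∂ vanishes on 0-chains, no augmentation). *)
Definition bnd (c : chain) : chain :=
  [ffun t => if t == set0 then 0
             else \sum_(v | v \notin t) signed v t (c (v |: t))].

Definition hchain (X : {set {set V}}) (n : nat) (c : chain) : Prop :=
  forall s, c s != 0 -> s \in X /\ #|s| = n.+1.

(* Inf_n(X) = G(X)_n ∩ ∂_n^{-1}(G(X)_{n-1})  (G(X)_{-1} = 0; note ∂_0 = 0). *)
Definition Inf (X : {set {set V}}) (n : nat) (c : chain) : Prop :=
  hchain X n c /\ forall t, bnd c t != 0 -> t \in X /\ #|t| = n.

Definition cyc (H : {set {set V}}) (n : nat) (c : chain) : Prop :=
  Inf H n c /\ bnd c = 0.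
Definition bdry (H : {set {set V}}) (n : nat) (c : chain) : Prop :=
  exists d, Inf H n.+1 d /\ bnd d = c.

(* Relative embedded homology H_n(Inf_*(H)/Inf_*(A)), presented (third
   isomorphism theorem) as relative cycles modulo relative boundaries:
   cycles  = {c ∈ Inf_n(H) | ∂c ∈ Inf_{n-1}(A)},
   bounds  = ∂ Inf_{n+1}(H) + Inf_n(A). *)
Definition rcyc (H A : {set {set V}}) (n : nat) (c : chain) : Prop :=
  Inf H n c /\ Inf A n.-1 (bnd c).
Definition rbdry (H A : {set {set V}}) (n : nat) (c : chain) : Prop :=
  exists d e, Inf H n.+1 d /\ Inf A n e /\ c = bnd d + e.

End Hyper.

(* Group isomorphism of quotients Z1/B1 ≅ Z2/B2 (Z_i ⊇ B_i subgroups of the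
   zmodTypes U, W), given on representatives: a map f sending Z1 into Z2,
   well defined modulo B1/B2, additive modulo B2, with trivial kernel and
   surjective modulo B2. *)
Definition quot_iso (U W : zmodType) (Z1 B1 : U -> Prop) (Z2 B2 : W -> Prop)
  : Prop :=
  exists f : U -> W,
    [/\ forall x, Z1 x -> Z2 (f x),
        forall x y, Z1 x -> Z1 y -> B1 (x - y) -> B2 (f x - f y),
        forall x y, Z1 x -> Z1 y -> B2 (f (x + y) - (f x + f y)),
        forall x, Z1 x -> B2 (f x) -> B1 x
      & forall z, Z2 z -> exists2 x, Z1 x & B2 (f x - z)].

(* Direct sum of two quotients, as a quotient of the product group. *)
Definition psum (U1 U2 : zmodType) (P1 : U1 -> Prop) (P2 : U2 -> Prop)
  (p : (U1 * U2)%type) : Prop := P1 p.1 /\ P2 p.2.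

(* Main.v *)
Require Import Defs.
From mathcomp Require Import all_boot all_order all_algebra.
Set Implicit Arguments. Unset Strict Implicit. Unset Printing Implicit Defensive.
Import GRing.Theory.
Local Open Scope ring_scope.

Section Aux.
Variables (V : finType) (G : zmodType).
Implicit Types (c d e : chain V G) (X Y H Z : {set {set V}}).

Definition res X c : chain V G := [ffun s => if s \in X then c s else 0].

Lemma resE X c s : res X c s = if s \in X then c s else 0.
Proof. by rewrite ffunE. Qed.

Lemma resD X c d : res X (c + d) = res X c + res X d.
Proof. by apply/ffunP => s; rewrite !ffunE; case: ifP; rewrite ?addr0. Qed.

Lemma resSub X c d : res X (c - d) = res X c - res X d.
Proof. by apply/ffunP => s; rewrite !ffunE; case: ifP; rewrite ?subr0. Qed.

Lemma res_res X c : res X (res X c) = res X c.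
Proof. by apply/ffunP => s; rewrite !ffunE; case: (s \in X). Qed.

Lemma signedD (v : V) (t : {set V}) (x y : G) : signed v t (x + y) = signed v t x + signed v t y.
Proof. by rewrite /signed; case: ifP => _ //; rewrite opprD. Qed.

Lemma signedN (v : V) (t : {set V}) (x : G) : signed v t (- x) = - signed v t x.
Proof. by rewrite /signed; case: ifP. Qed.

Lemma signed0 (v : V) (t : {set V}) : signed v t (0 : G) = 0.
Proof. by rewrite /signed; case: ifP; rewrite ?oppr0. Qed.

Lemma bndD c d : bnd (c + d) = bnd c + bnd d.
Proof.
apply/ffunP => t; rewrite !ffunE; case: ifP => _; first by rewrite addr0.
by rewrite -big_split; apply: eq_bigr => v _; rewrite ffunE signedD.
Qed.

Lemma bnd0 : bnd (0 : chain V G) = 0.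
Proof.
apply/ffunP => t; rewrite !ffunE; case: ifP => // _.
by apply: big1 => v _; rewrite ffunE signed0.
Qed.

Lemma bnd_nz c t : bnd c t != 0 ->
  t != set0 /\ exists v, v \notin t /\ c (v |: t) != 0.
Proof.
rewrite ffunE; case: (eqVneq t set0) => [->|t0]; first by rewrite !eqxx.
move=> nz; split => //.
have [v /andP[vt cv]] : exists v, (v \notin t) && (c (v |: t) != 0).
  apply/existsP; apply: contraNT nz => /existsPn hn; apply/eqP.
  apply: big1 => v vt; have := hn v; rewrite vt /= negbK => /eqP ->.
  exact: signed0.
by exists v.
Qed.

Lemma Inf0 X m : Inf X m (0 : chain V G).
Proof. by split => s; rewrite ?bnd0 ffunE eqxx. Qed.

Lemma Inf_mono X Y m c : X \subset Y -> Inf X m c -> Inf Y m c.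
Proof.
move=> /subsetP sXY [h1 h2]; split.
  by move=> s /h1 [/sXY ? ?].
by move=> t /h2 [/sXY ? ?].
Qed.

Lemma InfD X m c d : Inf X m c -> Inf X m d -> Inf X m (c + d).
Proof.
move=> [c1 c2] [d1 d2]; split.
  move=> s; rewrite ffunE; case: (eqVneq (c s) 0) => [->|/c1 //].
  by rewrite add0r => /d1.
move=> t; rewrite bndD ffunE; case: (eqVneq (bnd c t) 0) => [->|/c2 //].
by rewrite add0r => /d2.
Qed.

Lemma res_out Z Y m c : (forall s, s \in Z -> s \notin Y) -> hchain Z m c ->
  res Y c = 0.
Proof.
move=> hZY hc; apply/ffunP => s; rewrite !ffunE; case: ifP => // sY.
apply/eqP; apply: contraT => nz; have [sZ _] := hc s nz.
by move: (hZY s sZ); rewrite sY.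
Qed.

Lemma face Z c t : bnd (res Z c) t != 0 ->
  t != set0 /\ exists2 s, s \in Z & t \subset s.
Proof.
move=> /bnd_nz [t0 [v [vt]]]; rewrite resE; case: ifP => [vZ _|_]; last by rewrite eqxx.
by split => //; exists (v |: t) => //; apply: subsetUr.
Qed.

Definition good H X Y := [/\ X \subset H, Y \subset H,
  forall s, s \in H -> (s \in X) || (s \in Y),
  forall s, s \in X -> s \notin Y &
  forall t t', t \in X -> t' \in Y -> t :&: t' = set0].

Lemma good_sym H X Y : good H X Y -> good H Y X.
Proof.
move=> [h1 h2 h3 h4 h5]; split => //.
- by move=> s /h3; rewrite orbC.
- by move=> s sY; apply: contraTN sY => /h4.
- by move=> t t' tY t'X; rewrite setIC; apply: h5.
Qed.

Section Good.
Variables (H X Y : {set {set V}}).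
Hypothesis hg : good H X Y.

Lemma memX t s : t \in H -> t != set0 -> s \in X -> t \subset s -> t \in X.
Proof.
case: hg => _ _ h3 _ h5 tH t0 sX ts.
have := h3 t tH; case/orP => // tY.
have := h5 s t sX tY; rewrite (setIidPr ts) => e; by rewrite e eqxx in t0.
Qed.

Lemma decomp m c : hchain H m c -> c = res X c + res Y c.
Proof.
case: hg => _ _ h3 h4 _ hc; apply/ffunP => s; rewrite !ffunE.
case: (boolP (s \in X)) => sX; first by rewrite (negbTE (h4 s sX)) addr0.
case: (boolP (s \in Y)) => sY; first by rewrite add0r.
rewrite addr0; case: (eqVneq (c s) 0) => // /hc [sH _].
by move: (h3 s sH); rewrite (negbTE sX) (negbTE sY).
Qed.

Lemma sep c t : bnd (res X c) t != 0 -> bnd (res Y c) t != 0 -> False.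
Proof.
case: hg => _ _ _ _ h5 /face [t0 [s sX ts]] /face [_ [s' sY ts']].
have : t \subset s :&: s' by rewrite subsetI ts ts'.
by rewrite h5 // subset0 (negbTE t0).
Qed.

Lemma bnd_res_eq m c t : hchain H m c -> bnd (res X c) t != 0 ->
  bnd c t = bnd (res X c) t.
Proof.
move=> hc nz; rewrite {1}(decomp hc) bndD ffunE.
case: (eqVneq (bnd (res Y c) t) 0) => [->|nz']; first by rewrite addr0.
by case: (sep nz nz').
Qed.

Lemma res_Inf m c : Inf H m c -> Inf X m (res X c).
Proof.
move=> [hc hb]; split.
  by move=> s; rewrite resE; case: ifP => sX nz; [have [_ ->] := hc s nz | rewrite eqxx in nz].
move=> t nz; have [t0 [s sX ts]] := face nz.
have e := bnd_res_eq hc nz.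
have [tH tn] : t \in H /\ #|t| = m by apply: hb; rewrite e.
by split => //; apply: (memX tH t0 sX ts).
Qed.

Lemma res_bnd m e : Inf H m e -> bnd (res X e) = res X (bnd e).
Proof.
move=> [he hb]; apply/ffunP => t; rewrite resE.
case: (eqVneq (bnd (res X e) t) 0) => [z|nz].
  rewrite z; case: ifP => // tX.
  rewrite (decomp he) bndD ffunE z add0r; apply/esym/eqP; apply: contraT => nz'.
  have [t0 [s sY ts]] := face nz'.
  case: hg => _ _ _ _ h5; have := h5 t s tX sY.
  by rewrite (setIidPl ts) => e0; rewrite e0 eqxx in t0.
have e0 := bnd_res_eq he nz.
have [tH _] : t \in H /\ #|t| = m by apply: hb; rewrite e0.
have [t0 [s sX ts]] := face nz.
by rewrite (memX tH t0 sX ts) e0.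
Qed.

Lemma res_orth c : res Y (res X c) = 0.
Proof.
case: hg => _ _ _ h4 _; apply/ffunP => s; rewrite !ffunE.
case: ifP => // sY; case: ifP => // sX.
by move: (h4 s sX); rewrite sY.
Qed.

End Good.
End Aux.

Theorem mainTheorem12 (V : finType) (G : zmodType) (H A : {set {set V}}) :
  hypergraph H ->
  A \subset H ->
  (forall s s', s \in H -> s' \in H -> s :&: s' = set0 \/ s :&: s' \in H) ->
  (forall t t', t \in A -> t' \in H :\: A -> t :&: t' = set0) ->
  forall n : nat,
    quot_iso
      (psum (@rcyc V G H A n) (@rcyc V G H (H :\: A) n))
      (psum (@rbdry V G H A n) (@rbdry V G H (H :\: A) n))
      (@cyc V G H n) (@bdry V G H n).
Proof.
move=> _ hAH _ hdis n.
set B := H :\: A.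
have gAB : good H A B.
  split => //; first exact: subsetDl.
  - by move=> s sH; rewrite /B in_setD sH; case: (s \in A).
  - by move=> s sA; rewrite /B in_setD sA.
have gBA := good_sym gAB.
have hBH : B \subset H by case: gAB.
have hAB : forall s, s \in A -> s \notin B by case: gAB.
have hBA : forall s, s \in B -> s \notin A by case: gBA.
exists (fun x : chain V G * chain V G => res B x.1 + res A x.2); split.
- move=> [c1 c2] [[hc1 hb1] [hc2 hb2]] /=; split.
    apply: InfD; first exact: (Inf_mono hBH (res_Inf gBA hc1)).
    exact: (Inf_mono hAH (res_Inf gAB hc2)).
  rewrite bndD (res_bnd gBA hc1) (res_bnd gAB hc2).
  by rewrite (res_out hAB hb1.1) (res_out hBA hb2.1) addr0.
- move=> [x1 x2] [y1 y2] _ _ /= [[e1 [a1 [he1 [ha1 de]]]] [e2 [a2 [he2 [ha2 de']]]]].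
  exists (res B e1 + res A e2); split.
    apply: InfD; first exact: (Inf_mono hBH (res_Inf gBA he1)).
    exact: (Inf_mono hAH (res_Inf gAB he2)).
  rewrite bndD (res_bnd gBA he1) (res_bnd gAB he2).
  have -> : bnd e1 = x1 - y1 - a1 by rewrite /= in de; rewrite de addrK.
  have -> : bnd e2 = x2 - y2 - a2 by rewrite /= in de'; rewrite de' addrK.
  rewrite !resSub (res_out hAB ha1.1) (res_out hBA ha2.1) !subr0.
  by rewrite opprD addrACA.
- move=> x y _ _; exists 0; split; first exact: Inf0.
  by rewrite bnd0 /= !resD addrACA subrr.
- move=> [c1 c2] [[hc1 hb1] [hc2 hb2]] /= [d [hd hdd]]; split.
    exists (res B d), (res A c1); split; first exact: (Inf_mono hBH (res_Inf gBA hd)).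
    split; first exact: (res_Inf gAB hc1).
    rewrite (res_bnd gBA hd) hdd resD res_res (res_orth gAB) addr0 addrC.
    exact: (decomp gAB hc1.1).
  exists (res A d), (res B c2); split; first exact: (Inf_mono hAH (res_Inf gAB hd)).
  split; first exact: (res_Inf gBA hc2).
  rewrite (res_bnd gAB hd) hdd resD res_res (res_orth gBA) add0r.
  exact: (decomp gAB hc2.1).
- move=> z [hz bz]; exists (z, z).
    by split; split => //; rewrite bz; apply: Inf0.
  rewrite /= [res B z + _]addrC -(decomp gAB hz.1) subrr.
  exists 0; split; [exact: Inf0 | exact: bnd0].
Qed.
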